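(* For every positive integer $n$, $|\Delta(n)|$ equals the number of partitions of $n$ into distinct parts, which equals the number of partitions of $n$ into odd parts.
   Context: A partition of a positive integer $n$ is a finite non-increasing sequence $\alpha=(\alpha_1,\dots,\alpha_l)$ of positive integers with sum $n$; $\mathcal{P}(n)$ is the set of partitions of $n$, and $\alpha_i=0$ for $i>l$. The diagonal sequence is $\delta(\alpha)=(d_k)_{k\ge1}$ with $d_k=|\{i:1\le i\le k,\ \alpha_i+i-1\ge k\}|$, trailing zeros omitted, and $\Delta(n)=\{\delta(\alpha):\alpha\in\mathcal{P}(n)\}$. *)

(* Defs.v *)
From mathcomp Require Import all_boot.
Set Implicit Arguments. Unset Strict Implicit. Unset Printing Implicit Defensive.

(* A partition of n: a finite non-increasing sequence of positive integers
   with sum n, represented as a seq nat (alpha_1 is the head). *)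
Definition is_partition (n : nat) (a : seq nat) : Prop :=
  sorted geq a /\ all (fun x => 0 < x) a /\ sumn a = n.

(* alpha_i for 1-based i, with alpha_i = 0 for i > length. *)
Definition part (a : seq nat) (i : nat) : nat := nth 0 a i.-1.

Definition diag_entry (a : seq nat) (k : nat) : nat :=
  count (fun i => k <= part a i + i - 1) (iota 1 k).

Definition strip_zeros (s : seq nat) : seq nat :=
  rev (drop (find (fun x => x != 0) (rev s)) (rev s)).

(* d_k = 0 whenever k > sumn a (indeed k > max_i (alpha_i + i - 1)),
   so computing d_1 .. d_{sumn a} and stripping trailing zeros gives
   the diagonal sequence delta(alpha) with trailing zeros omitted. *)
Definition delta (a : seq nat) : seq nat :=
  strip_zeros [seq diag_entry a k | k <- iota 1 (sumn a)].

Definition in_Delta (n : nat) (d : seq nat) : Prop :=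
  exists a, is_partition n a /\ delta a = d.

Definition distinct_partition (n : nat) (a : seq nat) : Prop :=
  is_partition n a /\ uniq a.

Definition odd_partition (n : nat) (a : seq nat) : Prop :=
  is_partition n a /\ all odd a.

(* L is a duplicate-free enumeration of the set P; its size is then |P|. *)
Definition enumerates (P : seq nat -> Prop) (L : seq (seq nat)) : Prop :=
  uniq L /\ forall x, x \in L <-> P x.

(* Main.v *)
Require Import Defs.
From mathcomp Require Import all_boot zify.
Set Implicit Arguments. Unset Strict Implicit. Unset Printing Implicit Defensive.

Lemma sumn_pow2_split (B : seq nat) : uniq B ->
  sumn [seq 2 ^ b | b <- B] = (0 \in B) + 2 * sumn [seq 2 ^ b.-1 | b <- B & 0 < b].
Proof.
elim: B => [|b B IH] //= /andP [bB uB]. rewrite IH // in_cons.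
case: b bB => [|b] bB /=.
- by rewrite (negbTE bB).
- rewrite expnS. case: (0 \in B) => /=; lia.
Qed.

Lemma bit_sum B a : uniq B -> odd (sumn [seq 2 ^ b | b <- B] %/ 2 ^ a) = (a \in B).
Proof.
elim: a B => [|a IH] B uB.
  rewrite expn0 divn1 sumn_pow2_split // oddD oddM /= oddb.
  by case: (0 \in B).
rewrite sumn_pow2_split // expnS divnMA.
have -> : ((0 \in B) + 2 * sumn [seq 2 ^ b.-1 | b <- B & 0 < b]) %/ 2
   = sumn [seq 2 ^ b.-1 | b <- B & 0 < b].
  rewrite addnC mulnC divnMDl // divn_small ?addn0 //. by case: (0 \in B).
have -> : [seq 2 ^ b.-1 | b <- B & 0 < b] = [seq 2 ^ b | b <- [seq b.-1 | b <- B & 0 < b]].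
  by rewrite -map_comp.
rewrite IH.
  apply/mapP/idP => [[b] | H].
    rewrite mem_filter => /andP [b0 bB] ->. by rewrite prednK.
  exists a.+1 => //. by rewrite mem_filter.
rewrite map_inj_in_uniq ?filter_uniq // => x y.
rewrite !mem_filter => /andP [x0 _] /andP [y0 _] E. lia.
Qed.

Lemma bits_eq c c' : (forall a, odd (c %/ 2 ^ a) = odd (c' %/ 2 ^ a)) -> c = c'.
Proof.
move=> H.
suff: forall n c c', c <= n -> c' <= n ->
  (forall a, odd (c %/ 2 ^ a) = odd (c' %/ 2 ^ a)) -> c = c'.
  by move/(_ (c + c') c c'); apply => //; lia.
clear H. elim=> [|n IH] d d' cn c'n H. lia.
have H0 := H 0. rewrite expn0 !divn1 in H0.
have E : d %/ 2 = d' %/ 2.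
  apply: IH; [lia|lia|] => a. by rewrite -!divnMA -expnS.
rewrite (divn_eq d 2) (divn_eq d' 2) E !modn2 H0 //.
Qed.

Definition bits c := [seq a <- iota 0 c | odd (c %/ 2 ^ a)].

Lemma mem_bits c a : (a \in bits c) = odd (c %/ 2 ^ a).
Proof.
rewrite mem_filter mem_iota add0n /=.
case: (ltnP a c) => ac; first by rewrite andbT.
rewrite andbF divn_small //. apply: leq_ltn_trans ac _. exact: ltn_expl.
Qed.

Lemma sum_bits c : sumn [seq 2 ^ a | a <- bits c] = c.
Proof.
apply: bits_eq => a. rewrite bit_sum ?mem_bits //.
by rewrite filter_uniq // iota_uniq.
Qed.

Definition v2 x := logn 2 x.
Definition op x := x %/ 2 ^ logn 2 x.

Lemma op_spec x : 0 < x -> odd (op x) /\ x = op x * 2 ^ v2 x.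
Proof.
move=> x0. case: (pfactor_coprime (p:=2) (n:=x) isT x0) => m cm E.
have -> : op x = m by rewrite /op {1}E mulnK // expn_gt0.
by split; [rewrite -coprime2n | exact E].
Qed.

Lemma decomp o a : odd o -> v2 (o * 2 ^ a) = a /\ op (o * 2 ^ a) = o.
Proof.
move=> oo. have o0 : 0 < o by case: o oo.
have L : v2 (o * 2 ^ a) = a.
  by rewrite /v2 lognM ?expn_gt0 // logn_coprime ?coprime2n // pfactorK.
split=> //. by rewrite /op -/(v2 _) L mulnK // expn_gt0.
Qed.

Lemma op_pos x : 0 < x -> 0 < op x.
Proof. by move=> /op_spec [+ _]; case: (op x). Qed.

Lemma decomp_inj x y : 0 < x -> 0 < y -> op x = op y -> v2 x = v2 y -> x = y.
Proof.
move=> /op_spec [_ Ex] /op_spec [_ Ey] E1 E2. by rewrite Ex Ey E1 E2.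
Qed.

Definition fmap (l : seq nat) : seq nat :=
  sort geq (flatten [seq nseq (2 ^ v2 x) (op x) | x <- l]).

Definition gmap (y : seq nat) : seq nat :=
  sort geq [seq o * 2 ^ a | o <- undup y, a <- bits (count_mem o y)].

Lemma geq_total : total geq. Proof. by move=> x y; rewrite leq_total. Qed.
Lemma geq_trans : transitive geq. Proof. by move=> x y z /= H1 H2; apply: leq_trans H2 H1. Qed.
Lemma geq_anti : antisymmetric geq. Proof. by move=> x y /andP [H1 H2]; apply/eqP; rewrite eqn_leq; apply/andP; split. Qed.

Lemma perm_sortP s : perm_eq (sort geq s) s.
Proof. by rewrite perm_sort perm_refl. Qed.

Lemma sumn_mulmap (T : Type) k (f : T -> nat) s :
  sumn [seq k * f x | x <- s] = k * sumn [seq f x | x <- s].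
Proof. elim: s => [|x s IH] /=; [by rewrite muln0 | by rewrite IH mulnDr]. Qed.

Lemma fmap_O n l : distinct_partition n l -> odd_partition n (fmap l).
Proof.
move=> [[srt [pos sm]] u]. split; [split; [|split]|].
- exact: sort_sorted geq_total _.
- apply/allP => z; rewrite mem_sort => /flattenP [s /mapP [x xl ->]] /nseqP [-> _].
  apply: op_pos. by move/allP: pos; apply.
- rewrite (perm_sumn (perm_sortP _)) sumn_flatten -map_comp -sm.
  congr sumn. rewrite -[RHS]map_id. apply/eq_in_map => x xl /=.
  rewrite sumn_nseq. have x0 : 0 < x by move/allP: pos; apply.
  by case: (op_spec x0) => _ <-.
- apply/allP => z; rewrite mem_sort => /flattenP [s /mapP [x xl ->]] /nseqP [-> _].
  have x0 : 0 < x by move/allP: pos; apply.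
  by case: (op_spec x0).
Qed.

Lemma count_flat z l : count_mem z (flatten [seq nseq (2 ^ v2 x) (op x) | x <- l])
  = sumn [seq 2 ^ b | b <- [seq v2 x | x <- l & op x == z]].
Proof.
elim: l => [|x l IH] //=. rewrite count_cat IH count_nseq /=.
by case: (op x == z) => /=; rewrite ?mul1n ?mul0n.
Qed.

Lemma mem_by_count l x : all (fun y => 0 < y) l -> uniq l -> 0 < x ->
  (x \in l) = odd (count_mem (op x) (fmap l) %/ 2 ^ v2 x).
Proof.
move=> pos u x0.
have -> : count_mem (op x) (fmap l) =
   count_mem (op x) (flatten [seq nseq (2 ^ v2 x) (op x) | x <- l]).
  by apply/permP; apply: perm_sortP.
rewrite count_flat bit_sum.
  apply/idP/mapP => [xl | [y]].
    by exists x => //; rewrite mem_filter eqxx.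
  rewrite mem_filter => /andP [/eqP E yl] E2.
  have y0 : 0 < y by move/allP: pos; apply.
  by rewrite -(decomp_inj y0 x0 E (esym E2)).
rewrite map_inj_in_uniq ?filter_uniq // => y y'.
rewrite !mem_filter => /andP [/eqP E yl] /andP [/eqP E' yl'] E2.
apply: decomp_inj => //; [by move/allP: pos; apply | by move/allP: pos; apply | congruence].
Qed.

Lemma fmap_inj n l l' : distinct_partition n l -> distinct_partition n l' ->
  fmap l = fmap l' -> l = l'.
Proof.
move=> [[s [p _]] u] [[s' [p' _]] u'] E.
apply: (sorted_eq geq_trans geq_anti) => //.
apply: uniq_perm => // x.
case: (posnP x) => [-> | x0].
  apply/idP/idP => H. by move/allP: p => /(_ _ H). by move/allP: p' => /(_ _ H).
by rewrite (mem_by_count p u x0) (mem_by_count p' u' x0) E.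
Qed.

Lemma mem_gmap y o a : all odd y -> odd o ->
  (o * 2 ^ a \in gmap y) = odd (count_mem o y %/ 2 ^ a).
Proof.
move=> Hy oo. rewrite mem_sort.
apply/allpairsPdep/idP => [[o' [a' [o'y a'b E]]] | H].
  rewrite mem_undup in o'y. have oo' : odd o' by move/allP: Hy; apply.
  have [E1 E2] := decomp a oo; have [E1' E2'] := decomp a' oo'.
  rewrite E in E1 E2. rewrite E1' in E1; rewrite E2' in E2. subst.
  by rewrite -mem_bits.
exists o, a; split=> //; last by rewrite mem_bits.
rewrite mem_undup -has_pred1 has_count.
by move: H; case: (count _ y) => //; rewrite div0n.
Qed.

Lemma gmap_P n y : odd_partition n y -> distinct_partition n (gmap y).
Proof.
move=> [[srt [pos sm]] od]. split; [split; [|split]|].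
- exact: sort_sorted geq_total _.
- apply/allP => z; rewrite mem_sort => /allpairsPdep [o [a [oy _ ->]]].
  rewrite muln_gt0 expn_gt0 andbT. rewrite mem_undup in oy. by move/allP: pos; apply.
- rewrite (perm_sumn (perm_sortP _)) sumn_flatten -map_comp.
  have -> : [seq (sumn \o (fun o => [seq o * 2 ^ a | a <- bits (count_mem o y)])) o | o <- undup y]
     = [seq o * count_mem o y | o <- undup y].
    by apply/eq_map => o /=; rewrite (sumn_mulmap o (fun a => 2 ^ a)) sum_bits.
  rewrite -sm -(perm_sumn (perm_count_undup y)) sumn_flatten -map_comp.
  by congr sumn; apply/eq_map => o /=; rewrite sumn_nseq mulnC.
- rewrite sort_uniq. apply: allpairs_uniq_dep; first exact: undup_uniq.
    by move=> o _; rewrite filter_uniq // iota_uniq.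
  move=> p q /allpairsPdep [o [a [oy _ ->]]] /allpairsPdep [o' [a' [o'y _ ->]]] /= E.
  rewrite mem_undup in oy; rewrite mem_undup in o'y.
  have oo : odd o by move/allP: od; apply.
  have oo' : odd o' by move/allP: od; apply.
  move: E; rewrite /=. move: (decomp a oo) (decomp a' oo') => [E1 E2] [E1' E2'] E.
  rewrite E in E1 E2. rewrite E1' in E1; rewrite E2' in E2. by subst.
Qed.

Lemma gmap_inj n y y' : odd_partition n y -> odd_partition n y' ->
  gmap y = gmap y' -> y = y'.
Proof.
move=> [[s [p _]] od] [[s' [p' _]] od'] E.
apply: (sorted_eq geq_trans geq_anti) => //.
rewrite /perm_eq; apply/allP => x _ /=; apply/eqP. case: (boolP (odd x)) => ox.
  apply: bits_eq => a. by rewrite -!mem_gmap // E.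
have H1 : forall z, all odd z -> count_mem x z = 0.
  move=> z oz. apply/count_memPn. apply: contra ox. by move/allP: oz; apply.
by rewrite !H1.
Qed.

Definition beta (a : seq nat) i := part a i + i - 1.

Lemma sub_count_in (P Q : pred nat) s :
  (forall x, x \in s -> P x -> Q x) -> count P s <= count Q s.
Proof.
elim: s => [|x s IH] //= H.
apply: leq_add; last by apply: IH => y ys; apply: H; rewrite in_cons ys orbT.
case Px: (P x) => //=. by rewrite (H x) // in_cons eqxx.
Qed.

Lemma count_dc (P : pred nat) s m j :
  (forall x y, s <= x -> x <= y -> y < s + m -> P y -> P x) -> 0 < j ->
  (j <= count P (iota s m)) = (j <= m) && P (s + j.-1).
Proof.
elim: m s j => [|m IH] s j H j0.
  by rewrite /= leqNgt j0.
rewrite /=. case Ps: (P s).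
  case: j j0 => [|[|j]] // _.
    by rewrite /= addn0 Ps.
  rewrite add1n ltnS IH //=.
    by rewrite addSnnS.
  move=> x y h1 h2 h3; apply: H; lia.
have C0 : count P (iota s.+1 m) = 0.
  rewrite (@eq_in_count _ P pred0) ?count_pred0 // => x.
  rewrite mem_iota => /andP [h1 h2] /=. apply/negbTE/negP => Px.
  have : P s by apply: (H s x) => //; lia.
  by rewrite Ps.
rewrite C0 /=. rewrite leqn0 (gtn_eqF j0) /=.
case: (leqP j m.+1) => jm //=.
apply/esym/negbTE/negP => Pj.
have : P s by apply: (H s (s + j.-1)) => //; lia.
by rewrite Ps.
Qed.

Lemma nth_mono a i j : sorted geq a -> i <= j -> nth 0 a j <= nth 0 a i.
Proof.
move=> srt ij. case: (ltnP j (size a)) => jl; last by rewrite nth_default.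
have il : i < size a by apply: leq_ltn_trans ij jl.
apply: (sorted_leq_nth _ _ 0 srt) => //.
- by move=> x y z /= H1 H2; apply: leq_trans H2 H1.
- by move=> x /=.
Qed.

Lemma size_le_sumn a : all (fun x => 0 < x) a -> size a <= sumn a.
Proof. elim: a => [|x a IH] //= /andP [x0 pa]. have := IH pa. lia. Qed.

Lemma mem_le_sumn a x : x \in a -> x <= sumn a.
Proof.
elim: a => [|y a IH] //=. rewrite in_cons => /orP [/eqP -> | xa]. lia.
have := IH xa. lia.
Qed.

Lemma beta_bound a i : all (fun x => 0 < x) a -> 1 <= i <= size a ->
  part a i + i - 1 <= sumn a.
Proof.
elim: a i => [|x a IH] i //=.
  lia.
move=> /andP [x0 pa] /andP [i1 il].
case: i i1 il => [|[|i]] //= _ il.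
  rewrite /part /=. lia.
have := IH i.+1 pa. rewrite /part /=. move=> H. have := H ltac:(lia). lia.
Qed.

Lemma part_big a i : size a < i -> part a i = 0.
Proof. move=> h. rewrite /part nth_default //. lia. Qed.

Lemma count_0 (P : pred nat) s : (forall x, x \in s -> P x -> False) -> count P s = 0.
Proof.
elim: s => [|x s IH] //= H. rewrite IH.
  case Px: (P x) => //. by case: (H x); rewrite ?in_cons ?eqxx.
by move=> y ys; apply: H; rewrite in_cons ys orbT.
Qed.

Lemma diag_zero a k : all (fun x => 0 < x) a -> sumn a < k -> diag_entry a k = 0.
Proof.
move=> pa sk. rewrite /diag_entry. apply: count_0 => i. rewrite mem_iota => /andP [i1 ik] /=.
case: (leqP i (size a)) => il.
  have := beta_bound pa (i:=i) ltac:(lia). lia.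
rewrite part_big //. lia.
Qed.

Lemma diag_le a k : diag_entry a k <= k.
Proof. by rewrite /diag_entry; apply: leq_trans (count_size _ _) _; rewrite size_iota. Qed.

Lemma diag0 a : diag_entry a 0 = 0.
Proof. by []. Qed.

Lemma beta_step a i : sorted geq a -> 1 <= i -> part a i.+1 + i.+1 - 1 <= (part a i + i - 1).+1.
Proof.
move=> srt i1. have := nth_mono srt (leqnSn i.-1). rewrite /part /=.
  case: i i1 => [|i] // _ /=. rewrite subn1 /=. lia.
Qed.

Lemma diag_succ_le a k : sorted geq a -> diag_entry a k < k ->
  diag_entry a k.+1 <= diag_entry a k.
Proof.
move=> srt dk.
have : has (predC (fun i => k <= part a i + i - 1)) (iota 1 k).
  rewrite has_predC all_count size_iota. move: dk; rewrite /diag_entry. lia.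
move=> /hasP [i0]; rewrite mem_iota /= -ltnNge => /andP [i01 i0k] bi0.
rewrite /diag_entry.
have E1 : iota 1 k.+1 = iota 1 i0 ++ iota i0.+1 (k - i0).+1.
  rewrite -iotaD. congr iota. lia.
have E2 : iota 1 k = iota 1 i0 ++ iota i0.+1 (k - i0).
  rewrite -iotaD. congr iota. lia.
rewrite E1 E2 !count_cat. apply: leq_add.
  apply: sub_count_in => x _ /=. lia.
rewrite (iotaDl 1 i0) count_map /=.
have b1 := beta_step srt i01.
have -> : (k < part a (1 + i0) + (1 + i0) - 1) = false.
  apply/negbTE. rewrite -leqNgt. rewrite !add1n. lia.
rewrite add0n. apply: sub_count_in => x. rewrite mem_iota => /andP [h1 h2] /=.
have := beta_step srt (i:=x) ltac:(lia). rewrite !add1n. lia.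
Qed.

Lemma count_sum (P : pred nat) s : count P s = \sum_(x <- s) (P x : nat).
Proof. elim: s => [|x s IH] /=; by rewrite ?big_nil ?big_cons ?IH. Qed.

Lemma sumn_big (f : nat -> nat) s : sumn [seq f x | x <- s] = \sum_(x <- s) f x.
Proof. elim: s => [|x s IH] /=; by rewrite ?big_nil ?big_cons ?IH. Qed.

Lemma cnt_interval i b M : 0 < i ->
  count (fun k => (i <= k) && (k <= b)) (iota 1 M) = (minn b M).+1 - i.
Proof.
move=> i0. elim: M => [|M IH]. by rewrite minn0; case: i i0.
have -> : iota 1 M.+1 = iota 1 M ++ [:: 1 + M] by rewrite -[in LHS](addn1 M) iotaD.
rewrite count_cat IH /=.
case: (boolP ((i <= 1 + M) && (1 + M <= b))) => [/andP [h1 h2] | /nandP [h|h]] /=; lia.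
Qed.

Lemma sumn_part a M : size a <= M -> sumn [seq part a i | i <- iota 1 M] = sumn a.
Proof.
elim: a M => [|x a IH] M /=.
  move=> _. elim: M 1 => [|M IHM] s //=. by rewrite /part nth_nil IHM.
case: M => [|M] // aM.
rewrite /= -(IH M) //. congr (_ + _).
rewrite (iotaDl 1 1) -map_comp. congr sumn. apply/eq_in_map => i.
rewrite mem_iota => /andP [i1 _]. rewrite /part /= add0n.
by case: i i1.
Qed.

Lemma sum_diag a M : size a <= M ->
  (forall i, 1 <= i <= size a -> part a i + i - 1 <= M) ->
  sumn [seq diag_entry a k | k <- iota 1 M] = sumn a.
Proof.
move=> aM hb. rewrite -(sumn_part aM) !sumn_big.
have E1 : {in iota 1 M, forall k, diag_entry a k =
   \sum_(i <- iota 1 M) (((i <= k) && (k <= part a i + i - 1)) : nat)}.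
  move=> k. rewrite mem_iota => /andP [k1 kM].
  rewrite /diag_entry -count_sum.
  have -> : iota 1 M = iota 1 k ++ iota k.+1 (M - k).
    rewrite -iotaD. congr iota. lia.
  rewrite count_cat.
  rewrite (@count_0 (fun i => (i <= k) && (k <= part a i + i - 1)) (iota k.+1 (M - k))).
    rewrite addn0. apply: eq_in_count => i. rewrite mem_iota => /andP [_ h] /=. have -> : i <= k by lia. done.
  move=> i. rewrite mem_iota /=. lia.
rewrite (eq_big_seq _ E1) exchange_big /=.
apply: eq_big_seq => i. rewrite mem_iota => /andP [i1 iM].
rewrite -count_sum cnt_interval //.
case: (leqP i (size a)) => il.
  have := hb i ltac:(lia). lia.
rewrite part_big //. lia.
Qed.

Lemma nth_strip s i : nth 0 (strip_zeros s) i = nth 0 s i.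
Proof.
rewrite /strip_zeros. set r := rev s. set m := find _ r.
have Hs : s = rev (drop m r) ++ rev (take m r) by rewrite -rev_cat cat_take_drop revK.
rewrite [in RHS]Hs nth_cat. case: ifP => // /negbT; rewrite -leqNgt => h.
rewrite (nth_default _ h).
set q := i - _.
case: (ltnP q (size (rev (take m r)))) => hq; last by rewrite nth_default.
rewrite size_rev in hq. rewrite nth_rev //.
have hs : size (take m r) <= m by rewrite size_take; case: ifP; lia.
have pm : size (take m r) - q.+1 < m by lia.
rewrite nth_take //.
have := @before_find _ 0 (fun x => x != 0) r _ pm.
by case: (nth 0 r _).
Qed.

Lemma staircase a : sorted geq a -> all (fun x => 0 < x) a ->
  exists t, [/\ t <= sumn a, (forall k, k <= t -> diag_entry a k = k),
     (forall x y, t < x -> x <= y -> diag_entry a y <= diag_entry a x) &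
     (forall k, t < k -> diag_entry a k <= t)].
Proof.
move=> srt pa.
have exP : exists k, diag_entry a k.+1 < k.+1.
  exists (sumn a). by rewrite diag_zero.
case: (ex_minnP exP) => t Pt tmin.
have T2 : forall m, diag_entry a (t + m).+1 < (t + m).+1.
  elim=> [|m IH]; first by rewrite addn0.
  have := diag_succ_le srt IH. rewrite addnS. lia.
have T3 : forall x m, t < x -> diag_entry a (x + m) <= diag_entry a x.
  move=> x m tx. elim: m => [|m IH]; first by rewrite addn0.
  rewrite addnS. apply: leq_trans _ IH. apply: diag_succ_le srt _.
  have := T2 (x + m - t.+1). have -> : (t + (x + m - t.+1)).+1 = x + m by lia.
  done.
exists t; split.
- by apply: tmin; rewrite diag_zero.
- case=> [|k] kt; first by [].
  apply/eqP; rewrite eqn_leq diag_le /=. rewrite leqNgt. apply/negP => h.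
  have := tmin k h. lia.
- move=> x y tx xy. have -> : y = x + (y - x) by lia. exact: T3.
- move=> k tk. have -> : k = t.+1 + (k - t.+1) by lia.
  apply: leq_trans (T3 _ _ (ltnSn t)) _. by rewrite -ltnS.
Qed.

Lemma strict_beta l x y : sorted geq l -> uniq l -> 1 <= x -> x <= y -> y <= size l ->
  part l y + y <= part l x + x.
Proof.
move=> srt u x1 xy yl.
have -> : y = x + (y - x) by lia.
have : x + (y - x) <= size l by lia.
elim: (y - x) => [|m IH] h; first by rewrite addn0.
have := IH ltac:(lia).
suff : part l (x + m.+1) < part l (x + m) by lia.
rewrite /part addnS /=.
have h1 : (x + m).-1 < size l by lia.
have h2 : x + m < size l by lia.
rewrite ltn_neqAle nth_mono //; last by lia.
rewrite andbT nth_uniq //. lia.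
Qed.

Lemma diag_dc l j k : sorted geq l -> uniq l -> 0 < j ->
  (j <= diag_entry l k) = (j <= k) && (k <= part l j + j - 1).
Proof.
move=> srt u j0. rewrite /diag_entry count_dc //.
  by rewrite add1n prednK.
move=> x y x1 xy yk /=.
case: (leqP y (size l)) => yl.
  have := strict_beta srt u x1 xy yl. lia.
rewrite part_big //. lia.
Qed.

Lemma nat_eq_by_le x y : (forall j, 0 < j -> (j <= x) = (j <= y)) -> x = y.
Proof.
move=> H. apply/anti_leq/andP; split.
  case: x H => [|x] H //. by rewrite -H.
case: y H => [|y] H //. by rewrite H.
Qed.

Lemma diag_inj l l' : sorted geq l -> uniq l -> all (fun x => 0 < x) l ->
  sorted geq l' -> uniq l' -> all (fun x => 0 < x) l' ->
  (forall k, diag_entry l k = diag_entry l' k) -> l = l'.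
Proof.
have key : forall l l', sorted geq l -> uniq l -> all (fun x => 0 < x) l ->
  sorted geq l' -> uniq l' -> all (fun x => 0 < x) l' ->
  (forall k, diag_entry l k = diag_entry l' k) ->
  forall j, 1 <= j <= size l -> j <= size l' /\ part l j + j - 1 <= part l' j + j - 1.
  move=> {}l {}l' s u p s' u' p' E j /andP [j1 jl].
  have pj : 0 < part l j.
    move/allP: p; apply. rewrite /part. apply: mem_nth. by case: (j) j1 jl.
  have := diag_dc (part l j + j - 1) s u j1.
  rewrite E (diag_dc _ s' u' j1) leqnn andbT.
  have -> : j <= part l j + j - 1 by lia.
  move=> /andP [_ h].
  split=> //. case: (leqP j (size l')) => // jl'.
  rewrite (part_big jl') in h. lia.
move=> s u p s' u' p' E.
have E' : forall k, diag_entry l' k = diag_entry l k by move=> k; rewrite E.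
have sz : size l = size l'.
  apply/anti_leq/andP; split.
    case: (posnP (size l)) => [-> //| h].
    by case: (key l l' s u p s' u' p' E (size l) ltac:(lia)).
  case: (posnP (size l')) => [-> //| h].
  by case: (key l' l s' u' p' s u p E' (size l') ltac:(lia)).
apply: (eq_from_nth (x0 := 0) sz) => i il.
case: (key l l' s u p s' u' p' E i.+1 ltac:(lia)) => _.
case: (key l' l s' u' p' s u p E' i.+1 ltac:(lia)) => _.
rewrite /part /=. lia.
Qed.

Lemma diag_surj a : sorted geq a -> all (fun x => 0 < x) a ->
  exists l, [/\ sorted geq l, uniq l, all (fun x => 0 < x) l, sumn l = sumn a &
     forall k, diag_entry l k = diag_entry a k].
Proof.
move=> srt pa. set N := sumn a. set d := diag_entry a.
have [t [tN T1 T3 T5]] := staircase srt pa.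
pose c i := count (fun k => i <= d k) (iota t.+1 N).
pose l := mkseq (fun j => t - j + c j.+1) t.
have sz : size l = t by rewrite size_mkseq.
have partl : forall i, 1 <= i <= t -> part l i = t - i.-1 + c i.
  move=> i /andP [i1 it]. rewrite /part nth_mkseq; last by case: (i) i1 it.
  by rewrite prednK.
have partl0 : forall i, t < i -> part l i = 0 by move=> i ti; rewrite part_big // sz.
have cdc : forall i m, 0 < i -> 0 < m -> (m <= c i) = (m <= N) && (i <= d (t + m)).
  move=> i m i0 m0. rewrite count_dc //.
    by case: (m) m0 => // m' _; rewrite /= addSnnS.
  move=> x y h1 h2 h3 h4. apply: leq_trans h4 _. apply: T3 => //.
have cmono : forall i, c i.+1 <= c i.
  move=> i. apply: sub_count => x /=. lia.
have cN : forall i, 0 < i -> t + c i <= N.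
  move=> i i0. case: (posnP (c i)) => [->|cp]; first by rewrite addn0.
  have := cdc i (c i) i0 cp. rewrite leqnn => /esym/andP [_ h].
  rewrite leqNgt. apply/negP => h2.
  have := diag_zero (k := t + c i) pa h2. rewrite -/d. lia.
have strict : forall i, i.+1 < t -> nth 0 l i.+1 < nth 0 l i.
  move=> i it. rewrite !nth_mkseq //; last by lia.
  have := cmono i.+1. lia.
have pos : all (fun x => 0 < x) l.
  apply/allP => x /mapP [j]. rewrite mem_iota => /andP [_ jt] ->. lia.
have sgt : sorted (fun x y => y < x) l.
  apply/(sortedP 0) => i hi. rewrite sz in hi. exact: strict.
have ul : uniq l.
  apply: (sorted_uniq _ _ sgt).
    by move=> x y z /= h1 h2; apply: ltn_trans h2 h1.
  by move=> x /=; rewrite ltnn.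
have sl : sorted geq l.
  by apply: sub_sorted sgt => x y /= /ltnW.
have bprop : forall j k, 0 < j -> (j <= d k) = (j <= k) && (k <= part l j + j - 1).
  move=> j k j0. case: (leqP j t) => jt.
    rewrite partl ?j0 //.
    have -> : t - j.-1 + c j + j - 1 = t + c j by case: (j) j0 jt => // j' _ jt /=; lia.
    case: (leqP k t) => kt.
      rewrite /d T1 //. case: (leqP j k) => //= jk. lia.
    have -> : j <= k by lia.
    rewrite /=.
    have -> : (k <= t + c j) = (k - t <= c j) by lia.
    rewrite cdc //; last by lia.
    rewrite subnKC; last by lia.
    case: (leqP (k - t) N) => //= h.
    rewrite /d diag_zero //; last by lia.
    by rewrite leqNgt j0.
  rewrite partl0 //.
  have dk : d k <= t.
    case: (leqP k t) => kt; first by rewrite /d T1.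
    exact: T5.
  have -> : (j <= d k) = false by apply/negbTE; rewrite -ltnNge; lia.
  apply/esym/negbTE/negP => /andP [h1 h2]. lia.
have dl : forall k, diag_entry l k = d k.
  move=> k. apply: nat_eq_by_le => j j0. by rewrite diag_dc // bprop.
exists l; split=> //.
have -> : sumn l = sumn [seq diag_entry l k | k <- iota 1 N].
  rewrite sum_diag // ?sz //.
  move=> i /andP [i1 it]. rewrite partl ?i1 //.
  have := cN i i1. case: (i) i1 it => // i' _ it' /=. lia.
rewrite (eq_map dl) sum_diag //.
  exact: size_le_sumn.
move=> i hi. exact: beta_bound.
Qed.

Lemma delta_eq a b : sumn a = sumn b -> (forall k, diag_entry a k = diag_entry b k) ->
  delta a = delta b.
Proof. move=> E H. by rewrite /delta E (eq_map H). Qed.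

Lemma delta_diag a k : all (fun x => 0 < x) a -> 0 < k ->
  nth 0 (delta a) k.-1 = diag_entry a k.
Proof.
move=> pa k0. rewrite /delta nth_strip.
case: (leqP k (sumn a)) => h.
  rewrite (nth_map 0); last by rewrite size_iota; lia.
  rewrite nth_iota; last by lia.
  by rewrite add1n prednK.
rewrite nth_default ?diag_zero // size_map size_iota. lia.
Qed.

Lemma delta_diag_eq a b : all (fun x => 0 < x) a -> all (fun x => 0 < x) b ->
  delta a = delta b -> forall k, diag_entry a k = diag_entry b k.
Proof.
move=> pa pb E [|k] //. by rewrite -!delta_diag // E.
Qed.

Fixpoint allseqs (m k : nat) : seq (seq nat) :=
  if k is k'.+1 then [seq x :: s | x <- iota 1 m, s <- allseqs m k'] else [:: [::]].

Lemma mem_allseqs m k s :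
  (s \in allseqs m k) = (size s == k) && all (fun x => 0 < x <= m) s.
Proof.
elim: k s => [|k IH] [|x s] //=.
  apply/negbTE/allpairsP => [[[y t] /= [_ _]]] //.
apply/allpairsP/idP => [[[y t] /= [yI tS [-> ->]]] | /and3P [sk xm sm]].
  move: yI tS; rewrite mem_iota IH => yI /andP [/eqP -> ->]. rewrite eqxx andbT /=. lia.
exists (x, s) => /=; split=> //.
  rewrite mem_iota. lia.
by rewrite IH -eqSS sk sm.
Qed.

Definition U n := flatten [seq allseqs n k | k <- iota 0 n.+1].

Lemma mem_U n s : (s \in U n) = (size s <= n) && all (fun x => 0 < x <= n) s.
Proof.
apply/flattenP/andP => [[t /mapP [k] ] | [sn sa]].
  rewrite mem_iota => kn -> . rewrite mem_allseqs => /andP [/eqP sk sa]. split=> //. lia.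
exists (allseqs n (size s)); last by rewrite mem_allseqs eqxx.
apply/mapP; exists (size s) => //. rewrite mem_iota. lia.
Qed.

Definition ispb n (a : seq nat) := [&& sorted geq a, all (fun x => 0 < x) a & sumn a == n].

Definition Parts n := undup [seq a <- U n | ispb n a].

Lemma mem_Parts n a : (a \in Parts n) <-> is_partition n a.
Proof.
rewrite mem_undup mem_filter. split.
  by move=> /andP [/and3P [s p /eqP e] _].
move=> [s [p e]]. rewrite /ispb s p e eqxx /= mem_U.
rewrite -e size_le_sumn //=. apply/allP => x xa. rewrite mem_le_sumn // andbT.
by move/allP: p; apply.
Qed.

Theorem corollary2p4 (n : nat) : 0 < n ->
  exists (D P O : seq (seq nat)),
    [/\ enumerates (in_Delta n) D, enumerates (distinct_partition n) P,
        enumerates (odd_partition n) O,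
        size D = size P & size P = size O].
Proof.
move=> _.
set P := [seq a <- Parts n | uniq a].
set O := [seq a <- Parts n | all odd a].
set D := undup [seq delta a | a <- Parts n].
have mP : forall x, x \in P <-> distinct_partition n x.
  move=> x. rewrite mem_filter. split.
    by move=> /andP [u /mem_Parts h].
  by move=> [h u]; rewrite u; apply/mem_Parts.
have mO : forall x, x \in O <-> odd_partition n x.
  move=> x. rewrite mem_filter. split.
    by move=> /andP [u /mem_Parts h].
  by move=> [h u]; rewrite u; apply/mem_Parts.
have mD : forall x, x \in D <-> in_Delta n x.
  move=> x. rewrite mem_undup. split.
    by move=> /mapP [a /mem_Parts h ->]; exists a.
  by move=> [a [h <-]]; apply/mapP; exists a => //; apply/mem_Parts.
have uP : uniq P by rewrite filter_uniq // undup_uniq.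
have uO : uniq O by rewrite filter_uniq // undup_uniq.
have uD : uniq D by rewrite undup_uniq.
exists D, P, O; split=> //.
- have umD : uniq [seq delta a | a <- P].
    rewrite map_inj_in_uniq // => x y /mP [[sx [px ex]] ux] /mP [[sy [py ey]] uy] E.
    apply: diag_inj => //. exact: delta_diag_eq.
  rewrite -(size_map delta P). apply: perm_size. apply: uniq_perm => // x.
  apply/idP/idP.
    move=> /mD [a [[sa [pa ea]] <-]].
    have [l [sl ul pl el dl]] := diag_surj sa pa.
    apply/mapP; exists l.
      apply/mP; split=> //; split=> //; split=> //; by rewrite el.
    apply: delta_eq; by rewrite ?el.
  move=> /mapP [l /mP [h _] ->]. by apply/mD; exists l.
- apply/anti_leq/andP; split.
    rewrite -(size_map fmap P). apply: uniq_leq_size.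
      rewrite map_inj_in_uniq // => x y /mP hx /mP hy. exact: fmap_inj hx hy.
    move=> z /mapP [x /mP hx ->]. apply/mO. exact: fmap_O.
  rewrite -(size_map gmap O). apply: uniq_leq_size.
    rewrite map_inj_in_uniq // => x y /mO hx /mO hy. exact: gmap_inj hx hy.
  move=> z /mapP [x /mO hx ->]. apply/mP. exact: gmap_P.
Qed.
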